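(* Suppose we have $2$ agents with additive, identical, normalized valuations, provided with a prediction of accuracy $\eta<1-\frac{1-a}{\min\{2a(2+a),4\}}$ for some given $a\in(\varphi-1,1]$, where $\varphi=\frac{1+\sqrt5}{2}$; that is, the allowed error between the prediction and the true valuation is $D=1-\eta>\frac{1-a}{\min\{2a(2+a),4\}}$. Then there is no online algorithm that guarantees an $a$-EFX allocation for all instances with error at most $D$, even when $T'=T=4$ and the prediction and the true valuation are $4$-value functions.
   Context: Online fair division with predictions and identical valuations: goods $g_1,\dots,g_T$ arrive one per time step; all agents share a true additive normalized valuation $v$ ($v(g_t)\ge0$, $\sum_{t\in[T]}v(g_t)=1$, $v(S)=\sum_{g\in S}v(g)$), and before any arrival the algorithm receives a prediction $p=(p(g_1),\dots,p(g_{T'}))$ (an additive normalized valuation over $T'$ predicted goods) and the accuracy level. Error $D'=\frac12\sum_{t=1}^{\max\{T,T'\}}|p(g_t)-v(g_t)|$ (missing entries set to $0$); accuracy $\eta$ means the error is at most $1-\eta$. At time $t$, $v(g_t)$ is revealed and $g_t$ must be irrevocably allocated. For $S\ne\emptyset$, $\bar S=S\setminus\{g\}$ with $g\in\arg\max_{g'\in S}v(S\setminus\{g'\})$, $\bar\emptyset=\emptyset$. An allocation is $a$-EFX if $v(A_i)\ge a\cdot v(\bar A_j)$ for all $i,j$. A function is $k$-value if it takes at most $k$ distinct values. *)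

(* Defs.v *)
From HB Require Import structures.
From mathcomp Require Import all_boot all_order all_algebra.
Set Implicit Arguments. Unset Strict Implicit. Unset Printing Implicit Defensive.
Import Order.TTheory GRing.Theory Num.Theory.
Local Open Scope ring_scope.

(* Goods g_1..g_T are indexed by 'I_T (g_{t+1} <-> ordinal t). *)

Definition val_of (R : numDomainType) (T : nat) (v : 'I_T -> R) (S : {set 'I_T}) : R :=
  \sum_(g in S) v g.

Definition normalized (R : numDomainType) (T : nat) (v : 'I_T -> R) : Prop :=
  (forall g, 0 <= v g) /\ \sum_(g < T) v g = 1.

Definition k_value (R : numDomainType) (T : nat) (k : nat) (v : 'I_T -> R) : Prop :=
  (size (undup [seq v g | g <- enum 'I_T]) <= k)%N.

(* v(bar S), where bar S = S \ {g} with g in argmax_{g' in S} v(S \ {g'}),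
   and bar emptyset = emptyset; so v(bar S) = max_{g in S} v(S \ {g})
   (and 0 for S empty). *)
Definition val_bar (R : realDomainType) (T : nat) (v : 'I_T -> R) (S : {set 'I_T}) : R :=
  \big[Num.max/0]_(g in S) val_of v (S :\ g).

Definition a_EFX (R : realDomainType) (T : nat) (v : 'I_T -> R) (a : R)
  (A : bool -> {set 'I_T}) : Prop :=
  forall i j : bool, a * val_bar v (A j) <= val_of v (A i).

Definition pred_error (R : numFieldType) (T : nat) (p v : 'I_T -> R) : R :=
  2^-1 * \sum_(t < T) `|p t - v t|.

(* An online (deterministic) algorithm for 2 agents: given the prediction p
   and the values v(g_1),...,v(g_t) revealed so far (the last one being the
   current good g_t), it decides which agent (true / false) receives g_t. *)
Definition online_alg (R : Type) (T : nat) := ('I_T -> R) -> seq R -> bool.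

Definition revealed (R : Type) (T : nat) (v : 'I_T -> R) (t : 'I_T) : seq R :=
  [seq v g | g <- enum 'I_T & (nat_of_ord g <= nat_of_ord t)%N].

Definition run_alg (R : Type) (T : nat) (alg : online_alg R T) (p v : 'I_T -> R)
  : bool -> {set 'I_T} :=
  fun i => [set t : 'I_T | alg p (revealed v t) == i].

(* Main.v *)
Require Import Defs.
From HB Require Import structures.
From mathcomp Require Import all_boot all_order all_algebra.
From mathcomp Require Import ring lra.
Import Order.TTheory GRing.Theory Num.Theory.
Local Open Scope ring_scope.

Section Aux.
Variable R : rcfType.

Definition o0 : 'I_4 := @Ordinal 4 0 isT.
Definition o1 : 'I_4 := @Ordinal 4 1 isT.
Definition o2 : 'I_4 := @Ordinal 4 2 isT.
Definition o3 : 'I_4 := @Ordinal 4 3 isT.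

Definition mk4 (x y z u : R) : 'I_4 -> R :=
  fun t => if val t == 0%N then x else if val t == 1%N then y
           else if val t == 2%N then z else u.

Lemma sum4 (F : 'I_4 -> R) : \sum_(t < 4) F t = F o0 + F o1 + F o2 + F o3.
Proof.
rewrite !big_ord_recr big_ord0 /= add0r.
by congr (_ + _ + _ + _); congr F; apply: val_inj.
Qed.

Lemma valA (v : 'I_4 -> R) (c : 'I_4 -> bool) i :
  val_of v [set t | c t == i] =
  (if c o0 == i then v o0 else 0) + (if c o1 == i then v o1 else 0) +
  (if c o2 == i then v o2 else 0) + (if c o3 == i then v o3 else 0).
Proof.
rewrite /val_of big_mkcond sum4 /=.
by rewrite !inE.
Qed.

Lemma notEFX (a : R) v (A : bool -> {set 'I_4}) i j g :
  0 <= a -> g \in A j -> val_of v (A i) < a * (val_of v (A j) - v g) -> ~ a_EFX v a A.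
Proof.
move=> Ha Hg Hlt H; have := H i j.
have E : val_of v (A j) - v g = val_of v (A j :\ g).
  by rewrite /val_of (big_setD1 g Hg) /= addrC addrK.
have H3 : val_of v (A j :\ g) <= val_bar v (A j).
  by rewrite /val_bar (bigD1 g Hg) /= le_max lexx.
rewrite E in Hlt.
have H4 := ler_wpM2l Ha H3.
move=> H5; lra.
Qed.


Ltac try_one a i j g E0 E1 E2 E3 :=
  apply: (@notEFX a _ _ i j g); [ by [] | by rewrite /= inE ?E0 ?E1 ?E2 ?E3 |
    rewrite /= !valA ?E0 ?E1 ?E2 ?E3 /mk4 /=; lra ].

Ltac kill a E0 E1 E2 E3 :=
  first [ try_one a true false o0 E0 E1 E2 E3 | try_one a false true o0 E0 E1 E2 E3
        | try_one a true false o1 E0 E1 E2 E3 | try_one a false true o1 E0 E1 E2 E3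
        | try_one a true false o2 E0 E1 E2 E3 | try_one a false true o2 E0 E1 E2 E3
        | try_one a true false o3 E0 E1 E2 E3 | try_one a false true o3 E0 E1 E2 E3 ].

Lemma same_fail (a x y h : R) (c : 'I_4 -> bool) : 0 <= a -> 0 <= x -> 0 <= y ->
  h < a * (y + h) -> x + y < a * h -> c o0 = c o1 ->
  ~ a_EFX (mk4 x y h h) a (fun i => [set t | c t == i]).
Proof.
move=> Ha Hx Hy H1 H2 E.
have Hay : 0 <= a * y by apply: mulr_ge0.
case E0 : (c o0); case E1 : (c o1); rewrite E0 E1 in E => //;
case E2 : (c o2); case E3 : (c o3); kill a E0 E1 E2 E3.
Qed.

Lemma split_fail (a x y h w : R) (c : 'I_4 -> bool) : 0 <= a -> 0 <= x -> 0 <= y ->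
  x + y < a * h -> x + w < a * (2 * h - w) -> y + w < a * (2 * h - w) -> c o0 != c o1 ->
  ~ a_EFX (mk4 x y w (2 * h - w)) a (fun i => [set t | c t == i]).
Proof.
move=> Ha Hx Hy H2 H3 H4 E.
case E0 : (c o0); case E1 : (c o1); rewrite E0 E1 in E => //;
case E2 : (c o2); case E3 : (c o3); kill a E0 E1 E2 E3.
Qed.


Definition closedP (a x y h w : R) :=
  ([/\ 0 <= x, 0 <= y, 0 <= w, w <= h & x + y + 2 * h = 1] /\ [/\ h <= a * (y + h), x + y <= a * h, x + w <= a * (2 * h - w) & y + w <= a * (2 * h - w)]).
Definition strictP (a x y h w : R) :=
  ([/\ 0 <= x, 0 <= y, 0 <= w, w <= h & x + y + 2 * h = 1] /\ [/\ h < a * (y + h), x + y < a * h, x + w < a * (2 * h - w) & y + w < a * (2 * h - w)]).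

Lemma seg (a l xb yb hb wb xq yq hq wq : R) : 0 < l -> l <= 1 ->
  closedP a xb yb hb wb -> strictP a xq yq hq wq ->
  strictP a ((1-l)*xb + l*xq) ((1-l)*yb + l*yq) ((1-l)*hb + l*hq) ((1-l)*wb + l*wq).
Proof.
move=> l0 l1 [[b1 b2 b3 b4 b5] [b6 b7 b8 b9]] [[q1 q2 q3 q4 q5] [q6 q7 q8 q9]].
have m0 : 0 <= 1 - l by lra.
have P (u v : R) : 0 <= u -> 0 < v -> 0 < (1-l) * u + l * v.
  move=> hu hv; have := mulr_ge0 m0 hu; have := mulr_gt0 l0 hv; lra.
have Pw (u v : R) : 0 <= u -> 0 <= v -> 0 <= (1-l) * u + l * v.
  move=> hu hv; have := mulr_ge0 m0 hu; have := mulr_ge0 (ltW l0) hv; lra.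
split; split.
- exact: Pw.
- exact: Pw.
- exact: Pw.
- have : 0 <= hb - wb by lra.
  have : 0 <= hq - wq by lra.
  move=> H1 H2; have := Pw _ _ H2 H1; lra.
- have -> : (1 - l) * xb + l * xq + ((1 - l) * yb + l * yq) + 2 * ((1 - l) * hb + l * hq)
     = (1 - l) * (xb + yb + 2 * hb) + l * (xq + yq + 2 * hq) by ring.
  rewrite b5 q5; ring.
- have : 0 <= a * (yb + hb) - hb by lra.
  have : 0 < a * (yq + hq) - hq by lra.
  move=> H1 H2; have := P _ _ H2 H1; lra.
- have : 0 <= a * hb - (xb + yb) by lra.
  have : 0 < a * hq - (xq + yq) by lra.
  move=> H1 H2; have := P _ _ H2 H1; lra.
- have : 0 <= a * (2 * hb - wb) - (xb + wb) by lra.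
  have : 0 < a * (2 * hq - wq) - (xq + wq) by lra.
  move=> H1 H2; have := P _ _ H2 H1; lra.
- have : 0 <= a * (2 * hb - wb) - (yb + wb) by lra.
  have : 0 < a * (2 * hq - wq) - (yq + wq) by lra.
  move=> H1 H2; have := P _ _ H2 H1; lra.
Qed.

Lemma le_via (u v q k : R) : 0 < k -> v - u = q / k -> 0 <= q -> u <= v.
Proof. by move=> kp E q0; rewrite -subr_ge0 E divr_ge0 // ltW. Qed.

Lemma exists_point (a D : R) : 0 < a -> 0 < a ^+ 2 + a - 1 -> a <= 1 ->
  (1 - a) / Num.min (2 * a * (2 + a)) 4 < D ->
  exists x y h w, strictP a x y h w /\ (h - w) / 2 <= D.
Proof.
move=> ap Hphi Ha1 HD.
have a0 : 1 / 2 < a by nra.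
have a2 : 0 < 2 + a by lra.
have kp : 0 < a * (2 + a) by apply: mulr_gt0.
have an : a != 0 by rewrite gt_eqF.
have a2n : 2 + a != 0 by rewrite gt_eqF.
have [xb [yb [hb [wb [HB eB]]]]] :
    exists xb yb hb wb, closedP a xb yb hb wb /\ (hb - wb) / 2 < D.
  have [Hle|Hgt] := lerP (2 * a * (2 + a)) 4.
  - rewrite (min_l Hle) in HD.
    exists ((a ^+ 2 + a - 1) / (a * (2 + a))), ((1 - a) / (a * (2 + a))),
      (a / (a * (2 + a))), ((2 * a - 1) / (a * (2 + a))).
    split; [split; split|].
    + apply: (@le_via _ _ (a ^+ 2 + a - 1) _ kp); [by rewrite subr0 | lra].
    + apply: (@le_via _ _ (1 - a) _ kp); [by rewrite subr0 | lra].
    + apply: (@le_via _ _ (2 * a - 1) _ kp); [by rewrite subr0 | lra].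
    + apply: (@le_via _ _ (1 - a) _ kp); [by field; rewrite an a2n | lra].
    + by field; rewrite an a2n.
    + apply: (@le_via _ _ (0) _ kp); [by field; rewrite an a2n | lra].
    + apply: (@le_via _ _ (0) _ kp); [by field; rewrite an a2n | lra].
    + apply: (@le_via _ _ (2 - 2 * a - a ^+ 2) _ kp); [by field; rewrite an a2n | nra].
    + apply: (@le_via _ _ (0) _ kp); [by field; rewrite an a2n | lra].
    + have -> : (a / (a * (2 + a)) - (2 * a - 1) / (a * (2 + a))) / 2 =
               (1 - a) / (2 * a * (2 + a)) by field; rewrite an a2n.
      exact: HD.
  - rewrite (min_r (ltW Hgt)) in HD.
    exists ((1 - a) / 2), ((1 - a) / 2), (a / 2), ((2 * a - 1) / 2).
    split; [split; split|]; try lra; try nra.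
have hb0 : 0 <= (hb - wb) / 2 by case: HB => [[_ _ _ H _] _]; lra.
pose L := (1 - a) / (1 + a).
pose U := a / (2 + a).
have a1 : 0 < 1 + a by lra.
have eL : L * (1 + a) = 1 - a by rewrite /L mulfVK // gt_eqF.
have eU : U * (2 + a) = a by rewrite /U mulfVK // gt_eqF.
have LU : L < U.
  rewrite /L /U ltr_pdivlMr // mulrAC ltr_pdivrMr //; nra.
pose yq := (L + U) / 2.
have h1 : 1 - a < yq * (1 + a).
  rewrite -eL ltr_pM2r // /yq; lra.
have h2 : yq * (2 + a) < a.
  rewrite -[X in _ < X]eU ltr_pM2r // /yq; lra.
have L0 : 0 <= L by rewrite /L; apply: divr_ge0; lra.
have yq0 : 0 <= yq by rewrite /yq; lra.
have ayq : 0 <= a * yq by apply: mulr_ge0 => //; lra.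
have HQ : strictP a 0 yq ((1 - yq) / 2) 0.
  split; split; lra.
pose l := Num.min 1 (D - (hb - wb) / 2).
have l0 : 0 < l by rewrite /l lt_min; apply/andP; split; lra.
have l1 : l <= 1 by rewrite /l ge_min lexx.
have l2 : l <= D - (hb - wb) / 2 by rewrite /l ge_min lexx orbT.
have HP := @seg _ _ _ _ _ _ _ _ _ _ l0 l1 HB HQ.
eexists; eexists; eexists; eexists; split; first exact: HP.
have hq : 0 <= 1 / 2 - (1 - yq) / 2 by lra.
have := mulr_ge0 (ltW l0) hq.
have := mulr_ge0 (ltW l0) hb0.
move=> *; lra.
Qed.

End Aux.
Arguments mk4 {R}.
Arguments exists_point {R a D}.

Lemma revealed_eq (R : rcfType) (v v' : 'I_4 -> R) (t : 'I_4) :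
  (forall g : 'I_4, (nat_of_ord g <= nat_of_ord t)%N -> v g = v' g) ->
  revealed v t = revealed v' t.
Proof.
move=> H; rewrite /revealed; apply/eq_in_map => g.
by rewrite mem_filter => /andP[Hg _]; apply: H.
Qed.

Lemma mk4_eq (R : rcfType) (x y z u z' u' : R) (t : 'I_4) : (nat_of_ord t <= 1)%N ->
  revealed (mk4 x y z u) t = revealed (mk4 x y z' u') t.
Proof.
move=> Ht; apply: revealed_eq => -[[|[|n]] Hn] //= Hg.
by move: (leq_trans Hg Ht).
Qed.

Theorem theorem4p6 (R : rcfType) (a eta : R) :
  (Num.sqrt 5 - 1) / 2 < a -> a <= 1 ->
  eta < 1 - (1 - a) / Num.min (2 * a * (2 + a)) 4 ->
  forall alg : online_alg R 4,
  exists p v : 'I_4 -> R,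
    normalized p /\ normalized v /\ k_value 4 p /\ k_value 4 v /\
    pred_error p v <= 1 - eta /\ ~ a_EFX v a (run_alg alg p v).
Proof.
move=> Ha1 Ha2 Heta alg.
have s0 : 0 <= Num.sqrt (5 : R) by apply: sqrtr_ge0.
have s5 : Num.sqrt (5 : R) ^+ 2 = 5 by rewrite sqr_sqrtr.
have Hs : Num.sqrt (5 : R) < 2 * a + 1 by move: Ha1; rewrite ltr_pdivrMr //; lra.
have ap : 0 < a by nra.
have Hphi : 0 < a ^+ 2 + a - 1 by nra.
have HD : (1 - a) / Num.min (2 * a * (2 + a)) 4 < 1 - eta by lra.
have [x [y [h [w [[[H1 H2 H3 H4 H5] [H6 H7 H8 H9]] Herr]]]]] := exists_point ap Hphi Ha2 HD.
have kv (v : 'I_4 -> R) : k_value 4 v.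
  by rewrite /k_value (leq_trans (size_undup _)) // size_map size_enum_ord.
pose p := mk4 x y ((h + w) / 2) ((3 * h - w) / 2).
have Hp : normalized p.
  split; last by rewrite sum4 /p /mk4 /=; lra.
  by move=> -[[|[|[|n]]] Hn]; rewrite /p /mk4 /=; lra.
have ah : 0 < a * h by lra.
have h0 : 0 <= h by nra.
case E : (alg p (revealed (mk4 x y h h) o0) == alg p (revealed (mk4 x y h h) o1)).
- exists p, (mk4 x y h h); do ![split => //].
  + by move=> -[[|[|[|n]]] Hn]; rewrite /mk4 /=; lra.
  + by rewrite sum4 /mk4 /=; lra.
  + rewrite /pred_error sum4 /p /mk4 /= !subrr normr0.
    rewrite (ler0_norm (_ : (h + w) / 2 - h <= 0)); last lra.
    rewrite (ger0_norm (_ : 0 <= (3 * h - w) / 2 - h)); last lra.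
    lra.
  + rewrite /run_alg; apply: (@same_fail R a x y h (fun t => alg p (revealed (mk4 x y h h) t)) (ltW ap) H1 H2 H6 H7).
    exact/eqP.
- exists p, (mk4 x y w (2 * h - w)); do ![split => //].
  + by move=> -[[|[|[|n]]] Hn]; rewrite /mk4 /=; lra.
  + by rewrite sum4 /mk4 /=; lra.
  + rewrite /pred_error sum4 /p /mk4 /= !subrr normr0.
    rewrite (ger0_norm (_ : 0 <= (h + w) / 2 - w)); last lra.
    rewrite (ler0_norm (_ : (3 * h - w) / 2 - (2 * h - w) <= 0)); last lra.
    lra.
  + rewrite /run_alg; apply: (@split_fail R a x y h w (fun t => alg p (revealed (mk4 x y w (2 * h - w)) t)) (ltW ap) H1 H2 H7 H8 H9).
    rewrite /= -(@mk4_eq R x y h h) // -(@mk4_eq R x y h h w (2 * h - w) o1) //.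
    by rewrite E.
Qed.
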